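(* Let $k\ge2$. There exists an integer $m$ and a bipartite construction $B$ on $m$ vertices which contains a $K_k$-factor with at least $\lambda_k m$ red edges as well as a $K_k$-factor with at least $\lambda_k m$ blue edges.
   Context: A $K_k$-factor of $K_n$ ($k\mid n$) is a collection of $n/k$ vertex-disjoint copies of $K_k$ covering all vertices. The bipartite construction with ratio $\rho\in[0,1]$ is the red/blue-coloring of $K_n$ obtained by partitioning $V(K_n)=X\cup Y$ with $|X|=\rho n$, coloring all edges touching $X$ with one color and all edges inside $Y$ with the other; a bipartite construction is one with some ratio $\rho$. For $k\ge2$, $\lambda_k$ is the supremum of all $\lambda$ such that for every $n$ divisible by $k$ and every $\rho\in[0,1]$, the $n$-vertex bipartite construction with ratio $\rho$ has a $K_k$-factor with at least $\lambda n$ edges of the same color. *)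

(* Defs.v *)
From mathcomp Require Import all_boot all_order all_algebra.
From mathcomp Require Import boolp reals.
From mathcomp Require classical_sets.
Set Implicit Arguments. Unset Strict Implicit. Unset Printing Implicit Defensive.
Import Order.TTheory GRing.Theory Num.Theory.

(* A bipartite construction is given by the part X (Y = complement of X):
   an edge touching X is red, an edge inside Y is blue.
   (|X| = rho n ranges over all sizes 0..n as rho ranges over [0,1].) *)

Definition is_edge (n : nat) (e : {set 'I_n}) : bool := #|e| == 2.

Definition red_edge (n : nat) (X e : {set 'I_n}) : bool :=
  is_edge e && (e :&: X != finset.set0).

Definition blue_edge (n : nat) (X e : {set 'I_n}) : bool :=
  is_edge e && (e \subset setC X).

Definition is_Kfactor (n k : nat) (F : {set {set 'I_n}}) : bool :=
  partition F [set: 'I_n] && [forall B in F, #|B| == k].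

Definition factor_edges (n : nat) (F : {set {set 'I_n}}) : {set {set 'I_n}} :=
  [set e : {set 'I_n} | is_edge e && [exists B in F, e \subset B]].

Definition n_red (n : nat) (X : {set 'I_n}) (F : {set {set 'I_n}}) : nat :=
  #|[set e in factor_edges F | red_edge X e]|.

Definition n_blue (n : nat) (X : {set 'I_n}) (F : {set {set 'I_n}}) : nat :=
  #|[set e in factor_edges F | blue_edge X e]|.

Local Open Scope ring_scope.

Definition lambda_set (R : realType) (k : nat) : classical_sets.set R :=
  fun l => forall n : nat, (k %| n)%N -> forall X : {set 'I_n},
    exists F : {set {set 'I_n}}, is_Kfactor k F /\
      (l * n%:R <= (n_red X F)%:R \/ l * n%:R <= (n_blue X F)%:R).

Definition lambda_k (R : realType) (k : nat) : R := sup (@lambda_set R k).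

(* Main.v *)
Require Import Defs.
From mathcomp Require Import all_boot all_order all_algebra.
From mathcomp Require Import boolp reals.
From mathcomp Require classical_sets.
From mathcomp Require Import zify.
Import Order.TTheory GRing.Theory Num.Theory.
Set Implicit Arguments. Unset Strict Implicit.


Lemma sum_sub_blocks n (F : {set {set 'I_n}}) (e : {set 'I_n}) :
  trivIset F -> e != set0 ->
  \sum_(B in F) (e \subset B : nat) = [exists B in F, e \subset B].
Proof.
move=> tF e0.
case: (boolP [exists B in F, e \subset B]) => [/existsP[B0 /andP[B0F eB0]]|].
  rewrite (bigD1 B0) //= eB0 big1 // => B /andP[BF nB].
  case: (boolP (e \subset B)) => // eB.
  have := (elimT trivIsetP tF) B B0 BF B0F nB.
  case/set0Pn: e0 => x xe.
  move/disjointFr => /(_ x (subsetP eB x xe)).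
  by rewrite (subsetP eB0 x xe).
move/existsPn => H; rewrite big1 // => B BF.
by have := H B; rewrite BF /=; case: (e \subset B).
Qed.

Lemma cardE_sum (T : finType) (A : {set T}) :
  #|A| = \sum_x (if x \in A then 1 else 0).
Proof. by rewrite -sum1_card big_mkcond. Qed.

Lemma edges_sum n (F : {set {set 'I_n}}) (P : pred {set 'I_n}) :
  trivIset F ->
  #|[set e in factor_edges F | P e]| =
  \sum_(B in F) #|[set e : {set 'I_n} | (e \subset B) && is_edge e && P e]|.
Proof.
move=> tF.
rewrite cardE_sum.
under [in RHS]eq_bigr => B _ do rewrite cardE_sum.
rewrite exchange_big /=; apply: eq_bigr => e _.
rewrite !inE.
case: (boolP (is_edge e && P e)) => [/andP[ee Pe]|].
  rewrite ee Pe /= andbT.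
  have e0 : e != set0.
    apply/eqP => E; move: ee; rewrite /is_edge E cards0.
    done.
  have -> : (if [exists B in F, e \subset B] then 1 else 0) = [exists B in F, e \subset B] by case: ([exists _ in _, _]).
  rewrite -(sum_sub_blocks tF e0).
  by apply: eq_bigr => B _; rewrite inE ee Pe !andbT; case: (e \subset B).
move=> H; rewrite big1; last first.
  by move=> B _; rewrite inE; move: H; case: (e \subset B); case: (is_edge e); case: (P e).
by move: H; case: (is_edge e); case: (P e); rewrite ?andbF.
Qed.

Lemma blue_block n (X B : {set 'I_n}) :
  #|[set e : {set 'I_n} | (e \subset B) && is_edge e && blue_edge X e]| =
  'C(#|B :&: ~: X|, 2).
Proof.
rewrite -cards_draws; apply: eq_card => e; rewrite !inE /blue_edge /is_edge subsetI.
by case: (e \subset B); case: (#|e| == 2); case: (e \subset ~: X).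
Qed.

Lemma red_blue_block n (X B : {set 'I_n}) :
  #|[set e : {set 'I_n} | (e \subset B) && is_edge e && red_edge X e]| +
  #|[set e : {set 'I_n} | (e \subset B) && is_edge e && blue_edge X e]| =
  'C(#|B|, 2).
Proof.
rewrite -cards_draws.
set A := [set e : {set 'I_n} | e \subset B & #|e| == 2].
set Bl := [set e : {set 'I_n} | e \subset ~: X].
rewrite -(cardsID Bl A) addnC; congr (_ + _); apply: eq_card => e;
  rewrite !inE /red_edge /blue_edge /is_edge.
  by case: (e \subset B); case: (#|e| == 2); case: (e \subset ~: X).
have -> : (e :&: X != set0) = ~~ (e \subset ~: X).
  by rewrite setI_eq0 disjoint_subset; congr (~~ _); apply: eq_subset_r => x; rewrite !inE.
by case: (e \subset B); case: (#|e| == 2); case: (e \subset ~: X).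
Qed.

Lemma n_blue_sum n (X : {set 'I_n}) F : trivIset F ->
  n_blue X F = \sum_(B in F) 'C(#|B :&: ~: X|, 2).
Proof.
move=> tF; rewrite /n_blue edges_sum //; apply: eq_bigr => B _; exact: blue_block.
Qed.

Lemma n_red_blue_sum n (X : {set 'I_n}) F : trivIset F ->
  n_red X F + n_blue X F = \sum_(B in F) 'C(#|B|, 2).
Proof.
move=> tF; rewrite /n_blue /n_red !edges_sum // -big_split /=.
apply: eq_bigr => B _; exact: red_blue_block.
Qed.

Lemma sum_inter n (F : {set {set 'I_n}}) (Y : {set 'I_n}) :
  partition F [set: 'I_n] -> \sum_(B in F) #|B :&: Y| = #|Y|.
Proof.
case/and3P => /eqP cF tF _.
under eq_bigr => B _ do rewrite cardE_sum.
rewrite exchange_big [RHS]cardE_sum; apply: eq_bigr => y _.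
have y0 : [set y] != set0 by apply/set0Pn; exists y; rewrite inE.
have ex : [exists B in F, [set y] \subset B].
  have : y \in cover F by rewrite cF inE.
  case/bigcupP => B BF yB; apply/existsP; exists B; rewrite BF sub1set yB.
  done.
case: (boolP (y \in Y)) => yY.
  transitivity (nat_of_bool [exists B in F, [set y] \subset B]); last by rewrite ex.
  rewrite -(sum_sub_blocks tF y0).
  by apply: eq_bigr => B _; rewrite sub1set inE yY andbT; case: (y \in B).
by rewrite big1 // => B _; rewrite inE (negbTE yY) andbF.
Qed.

Definition fib n q (f : 'I_n -> 'I_q) (i : 'I_q) : {set 'I_n} := [set v | f v == i].
Definition lfactor n q (f : 'I_n -> 'I_q) : {set {set 'I_n}} := fib f @: [set: 'I_q].

Lemma lfactor_ok n q k (f : 'I_n -> 'I_q) : 0 < k -> (forall i, #|fib f i| = k) ->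
  is_Kfactor k (lfactor f) /\ {in [set: 'I_q] &, injective (fib f)}.
Proof.
move=> k0 Hf.
have n0 : set0 \notin lfactor f.
  apply/imsetP => [[i _ E]]; move: (Hf i); rewrite -E cards0 => E0.
  by rewrite -E0 in k0.
have [tr inj] : trivIset (lfactor f) /\ {in [set: 'I_q] &, injective (fib f)}.
  apply: trivIimset => // i j _ _ nij.
  rewrite -setI_eq0; apply/eqP/setP => v; rewrite !inE.
  apply/negP => /andP[/eqP fi /eqP fj]; move: nij; by rewrite -fi -fj eqxx.
split => //; apply/andP; split.
  apply/and3P; split => //; apply/eqP/setP => v; rewrite inE.
  rewrite /lfactor cover_imset; apply/bigcupP; exists (f v) => //; by rewrite inE.
apply/forallP => B; apply/implyP => /imsetP[i _ ->]; by rewrite Hf.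
Qed.

Lemma lfactor_sum n q (f : 'I_n -> 'I_q) (G : {set 'I_n} -> nat) :
  {in [set: 'I_q] &, injective (fib f)} ->
  \sum_(B in lfactor f) G B = \sum_(i < q) G (fib f i).
Proof. by move=> inj; rewrite /lfactor big_imset //; apply: eq_bigl => i; rewrite inE. Qed.

Lemma card_fib n q k (f : 'I_n -> 'I_q) (i : 'I_q) (g : 'I_k -> 'I_n) (P : pred 'I_n) :
  injective g -> (forall j, f (g j) = i) -> (forall v, f v = i -> exists j, v = g j) ->
  #|fib f i :&: [set v | P v]| = #|[set j | P (g j)]|.
Proof.
move=> ig fg gf.
have -> : fib f i :&: [set v | P v] = g @: [set j | P (g j)].
  apply/setP => v; rewrite !inE; apply/andP/imsetP.
    by case=> /eqP /gf [j ->] Pj; exists j; rewrite ?inE.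
  by case=> j; rewrite inE => Pj ->; rewrite fg eqxx.
by rewrite card_imset.
Qed.

Lemma card_lt k a : a <= k -> #|[set j : 'I_k | j < a]| = a.
Proof.
move=> ak.
have -> : [set j : 'I_k | j < a] = (widen_ord ak) @: [set: 'I_a].
  apply/setP => j; rewrite !inE; apply/idP/imsetP.
    by move=> ja; exists (Ordinal ja) => //; apply: val_inj.
  by case=> j' _ ->; rewrite /= ltn_ord.
by rewrite card_imset ?cardsT ?card_ord // => x y /(congr1 val) /= /val_inj.
Qed.

Lemma sum_if q a x y : \sum_(i < q) (if i < a then x else y) = minn a q * x + (q - a) * y.
Proof.
elim: q => [|q IH]; first by rewrite big_ord0 minn0 sub0n.
rewrite big_ord_recr /= IH.
case: (ltnP q a) => qa.
  rewrite (minn_idPr qa).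
  have -> : q - a = 0 by lia.
  have -> : q.+1 - a = 0 by lia.
  by rewrite !mul0n !addn0 mulSn addnC.
rewrite (minn_idPl (leqW qa)).
have -> : q.+1 - a = (q - a).+1 by lia.
rewrite mulSn; lia.
Qed.

Lemma bin2_2 c : 'C(c, 2) * 2 = c * c.-1.
Proof.
elim: c => [|c IH] //.
rewrite binS bin1 mulnDl IH /=; case: c IH => [|c] _ //=; lia.
Qed.

Lemma Kf_part n k (F : {set {set 'I_n}}) : is_Kfactor k F -> partition F [set: 'I_n].
Proof. by case/andP. Qed.

Lemma Kf_card n k (F : {set {set 'I_n}}) : is_Kfactor k F -> forall B, B \in F -> #|B| = k.
Proof. by case/andP => _ /forallP H B BF; move: (H B); rewrite BF => /eqP. Qed.

Lemma Kf_num n k (F : {set {set 'I_n}}) : is_Kfactor k F -> #|F| * k = n.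
Proof.
move=> H; rewrite -[RHS]card_ord -cardsT (card_partition (Kf_part H)).
rewrite -sum_nat_const; apply: eq_bigr => B BF; by rewrite (Kf_card H).
Qed.

Lemma Kf_redblue n k (X : {set 'I_n}) F : is_Kfactor k F ->
  n_red X F + n_blue X F = #|F| * 'C(k, 2).
Proof.
move=> H; have := Kf_part H => /and3P[_ tF _].
rewrite n_red_blue_sum // -sum_nat_const; apply: eq_bigr => B BF; by rewrite (Kf_card H).
Qed.

Lemma Kf_blue_up n k (X : {set 'I_n}) F : is_Kfactor k F ->
  n_blue X F * 2 <= #|~: X| * k.-1.
Proof.
move=> H; have := Kf_part H => /and3P[_ tF _].
rewrite n_blue_sum // -(sum_inter _ (Kf_part H)) !big_distrl /=.
apply: leq_sum => B BF; rewrite bin2_2.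
have : #|B :&: ~: X| <= k by rewrite -(Kf_card H BF); apply: subset_leq_card; apply: subsetIl.
move: #|_| => c ck; nia.
Qed.

Lemma Kf_blue_low n k (X : {set 'I_n}) F s : is_Kfactor k F ->
  2 * s * #|~: X| <= n_blue X F * 2 + #|F| * (s * s.+1).
Proof.
move=> H; have := Kf_part H => /and3P[_ tF _].
rewrite n_blue_sum // -(sum_inter _ (Kf_part H)) big_distrl big_distrr -sum_nat_const /= -big_split /=.
apply: leq_sum => B BF; rewrite bin2_2.
move: #|_| => c; case: (leqP c s) => cs; nia.
Qed.

Section Construct.
Variables (q k : nat) (q0 : 0 < q) (k0 : 0 < k).

Lemma f1_lt (v : 'I_(q * k)) : v %/ k < q.
Proof. by rewrite ltn_divLR // ltn_ord. Qed.
Definition f1 (v : 'I_(q * k)) : 'I_q := Ordinal (f1_lt v).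
Lemma g1_lt (i : 'I_q) (j : 'I_k) : i * k + j < q * k.
Proof. have := ltn_ord i; have := ltn_ord j; nia. Qed.
Definition g1 (i : 'I_q) (j : 'I_k) : 'I_(q * k) := Ordinal (g1_lt i j).

Lemma f2_lt (v : 'I_(q * k)) : v %% q < q.
Proof. by rewrite ltn_pmod. Qed.
Definition f2 (v : 'I_(q * k)) : 'I_q := Ordinal (f2_lt v).
Lemma g2_lt (i : 'I_q) (j : 'I_k) : i + j * q < q * k.
Proof. have := ltn_ord i; have := ltn_ord j; nia. Qed.
Definition g2 (i : 'I_q) (j : 'I_k) : 'I_(q * k) := Ordinal (g2_lt i j).

Lemma g1_inj i : injective (g1 i).
Proof. move=> j j' /(congr1 val) /= /eqP; rewrite eqn_add2l => /eqP; exact: val_inj. Qed.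
Lemma g2_inj i : injective (g2 i).
Proof. move=> j j' /(congr1 val) /= /eqP; rewrite eqn_add2l eqn_mul2r gtn_eqF //= => /eqP; exact: val_inj. Qed.

Lemma f1g1 i j : f1 (g1 i j) = i.
Proof. apply: val_inj => /=; rewrite divnMDl // divn_small ?addn0 //. Qed.
Lemma f2g2 i j : f2 (g2 i j) = i.
Proof. apply: val_inj => /=; rewrite addnC modnMDl modn_small //. Qed.

Lemma g1f1 i v : f1 v = i -> exists j, v = g1 i j.
Proof.
move=> <-; exists (Ordinal (ltn_pmod v k0)); apply: val_inj => /=; exact: divn_eq.
Qed.
Lemma g2f2 i v : f2 v = i -> exists j, v = g2 i j.
Proof.
move=> <-.
have vq : v %/ q < k by rewrite ltn_divLR //; have := ltn_ord v; lia.
exists (Ordinal vq); apply: val_inj => /=; rewrite addnC; exact: divn_eq.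
Qed.

Lemma fib1_card i : #|fib f1 i| = k.
Proof.
have -> : fib f1 i = fib f1 i :&: [set v | true] by apply/setP => v; rewrite !inE andbT.
rewrite (card_fib _ (@g1_inj i) (@f1g1 i) (@g1f1 i)).
have -> : [set j : 'I_k | true] = [set: 'I_k] by apply/setP => j; rewrite !inE.
by rewrite cardsT card_ord.
Qed.
Lemma fib2_card i : #|fib f2 i| = k.
Proof.
have -> : fib f2 i = fib f2 i :&: [set v | true] by apply/setP => v; rewrite !inE andbT.
rewrite (card_fib _ (@g2_inj i) (@f2g2 i) (@g2f2 i)).
have -> : [set j : 'I_k | true] = [set: 'I_k] by apply/setP => j; rewrite !inE.
by rewrite cardsT card_ord.
Qed.

Variables (N : nat).
Definition Xc : {set 'I_(q * k)} := [set v : 'I_(q * k) | N <= v].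
Lemma XcC : ~: Xc = [set v : 'I_(q * k) | v < N].
Proof. by apply/setP => v; rewrite !inE -ltnNge. Qed.

Lemma fib1_Y t i : N = t * k -> #|fib f1 i :&: ~: Xc| = if i < t then k else 0.
Proof.
move=> hN; rewrite XcC (card_fib _ (@g1_inj i) (@f1g1 i) (@g1f1 i)) hN.
case: ifP => it.
  have -> : [set j : 'I_k | g1 i j < t * k] = [set: 'I_k].
    apply/setP => j; rewrite !inE /=; have := ltn_ord j; nia.
  by rewrite cardsT card_ord.
apply/eqP; rewrite cards_eq0; apply/eqP/setP => j; rewrite !inE /=.
move/negbT: it; rewrite -leqNgt => it; apply/negbTE; rewrite -leqNgt; nia.
Qed.

Lemma fib2_Y s p i : N = s * q + p -> p <= q -> s < k ->
  #|fib f2 i :&: ~: Xc| = if i < p then s.+1 else s.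
Proof.
move=> hN pq sk; rewrite XcC (card_fib _ (@g2_inj i) (@f2g2 i) (@g2f2 i)) hN.
have iq := ltn_ord i.
have -> : [set j : 'I_k | g2 i j < s * q + p] = [set j : 'I_k | j < (if i < p then s.+1 else s)].
  apply/setP => j; rewrite !inE /=.
  have jk := ltn_ord j.
  case: ifP => ip.
    case: (ltngtP j s) => js; first [apply/idP; nia | apply/negbTE/negP => H; nia | apply/idP/idP => H; nia].
  move/negbT: ip; rewrite -leqNgt => ip.
  case: (ltngtP j s) => js; first [apply/idP; nia | apply/negbTE/negP => H; nia | apply/idP/idP => H; nia].
rewrite card_lt //; case: ifP => //; lia.
Qed.

End Construct.

Lemma key_id K s D : D + s*(s+K) = K.+2*K.+1 ->
 (2*s+K+1)*K.+2*(K.+2*K.+1) + (2*s+K+1)*K.+2*(s*s.+1) = 2*s*((s*(2*s+K+1)+D)*K.+2) + (s*(2*s+K+1)+D)*K.+2*K.+1.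
Proof. move=> <-. lia. Qed.

Lemma ub_arith K s D r b C : D + s*(s+K) = K.+2*K.+1 ->
  r + b = (2*s+K+1)*K.+2 * C -> C * 2 = K.+2 * K.+1 ->
  b * 2 <= (s*(2*s+K+1)+D) * K.+2 * K.+1 ->
  2 * s * ((s*(2*s+K+1)+D) * K.+2) <= b * 2 + (2*s+K+1)*K.+2 * (s * s.+1) ->
  r <= (s*(2*s+K+1)+D) * C /\ b <= (s*(2*s+K+1)+D) * C.
Proof.
move=> hD hrb hC hbu hbl.
have key := @key_id K s D hD.
have e1 : (2*s+K+1)*K.+2 * C * 2 = (2*s+K+1)*K.+2 * (K.+2*K.+1) by rewrite -mulnA hC.
have e2 : (s*(2*s+K+1)+D) * C * 2 = (s*(2*s+K+1)+D) * K.+2 * K.+1 by rewrite -mulnA hC mulnA.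
split; lia.
Qed.

Lemma red_arith K s D r : D + s*(s+K) = K.+2*K.+1 -> D <= 2*s+K+1 -> 0 < s ->
  r + (D*K.+2 * 'C(s.+1,2) + ((2*s+K+1)*K.+2 - D*K.+2) * 'C(s,2)) = (2*s+K+1)*K.+2 * 'C(K.+2,2) ->
  r = (s*(2*s+K+1)+D) * 'C(K.+2,2).
Proof.
move=> hD D2 s0 hrb.
have pq : D*K.+2 <= (2*s+K+1)*K.+2 by rewrite leq_mul2r D2 orbT.
have W : ((2*s+K+1)*K.+2 - D*K.+2) * 'C(s,2) + D*K.+2 * 'C(s,2) = (2*s+K+1)*K.+2 * 'C(s,2).
  by rewrite -mulnDl subnK.
move: W hrb; move: ((2*s+K+1)*K.+2 - D*K.+2) => w W hrb.
have b2k := bin2_2 K.+2. have b2s := bin2_2 s. have b2s1 := bin2_2 s.+1.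
have hD2 : (2*s+K+1)*K.+2*(D + s*(s+K)) = (2*s+K+1)*K.+2*(K.+2*K.+1) by rewrite hD.
have e1 : D*K.+2*'C(s.+1,2)*2 = D*K.+2*(s.+1*s) by rewrite -mulnA b2s1.
have e0 : (2*s+K+1)*K.+2*'C(s,2)*2 = (2*s+K+1)*K.+2*(s*s.-1) by rewrite -mulnA b2s.
have e0' : D*K.+2*'C(s,2)*2 = D*K.+2*(s*s.-1) by rewrite -mulnA b2s.
have ek : (2*s+K+1)*K.+2*'C(K.+2,2)*2 = (2*s+K+1)*K.+2*(K.+2*K.+1) by rewrite -mulnA b2k.
have et : (s*(2*s+K+1)+D)*'C(K.+2,2)*2 = (s*(2*s+K+1)+D)*(K.+2*K.+1) by rewrite -mulnA b2k.
case: s s0 hD D2 pq W hrb b2s b2s1 hD2 e1 e0 e0' ek et => [|S] // _ /=; lia.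
Qed.



Lemma core K : exists (q : nat) (V : nat) (X : {set 'I_(q * K.+2)}), 0 < q /\
  (forall F, is_Kfactor K.+2 F -> n_red X F <= V /\ n_blue X F <= V) /\
  (exists F, is_Kfactor K.+2 F /\ n_red X F = V) /\
  (exists F, is_Kfactor K.+2 F /\ n_blue X F = V).
Proof.
pose P := fun s => s * (s + K) <= K.+2 * K.+1.
have Pex : exists s, P s by exists 0.
have Pub : forall s, P s -> s <= K.+1.
  move=> s; rewrite /P => H; case: (leqP s K.+1) => // H2.
  have : K.+2 * (K.+2 + K) <= s * (s + K) by apply: leq_mul => //; lia.
  lia.
case: (ex_maxnP Pex Pub) => s Ps smax.
have Ps1 : K.+2 * K.+1 < s.+1 * (s.+1 + K).
  rewrite ltnNge; apply/negP => H; have := smax _ H; lia.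
have sk : s < K.+2 by have := Pub _ Ps; lia.
rewrite /P in Ps.
pose D := K.+2 * K.+1 - s * (s + K).
have hD : D + s * (s + K) = K.+2 * K.+1 by rewrite /D subnK.
have D2 : D <= 2 * s + K + 1 by nia.
pose q := (2 * s + K + 1) * K.+2.
pose p := D * K.+2.
pose t := s * (2 * s + K + 1) + D.
have q0 : 0 < q by rewrite /q; nia.
have k0 : 0 < K.+2 by [].
have pq : p <= q by rewrite /p /q; nia.
have tq : t <= q by rewrite /t /q; nia.
have hN : t * K.+2 = s * q + p by rewrite /t /q /p; nia.
pose N := t * K.+2.
pose X := Xc q K.+2 N.
have cY : #|~: X| = N.
  rewrite /X XcC card_lt //; rewrite /N; nia.
have b2k := bin2_2 K.+2.
have b2s := bin2_2 s.
have b2s1 := bin2_2 s.+1.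
pose V := t * 'C(K.+2, 2).
have s0 : 0 < s by apply: smax; rewrite /P mul1n; apply: leq_trans (leq_pmull _ _) => //.
exists q, V, X; split => //; split.
  move=> F HF.
  have hnum := Kf_num HF.
  have hF : #|F| = q by apply/eqP; rewrite -(eqn_pmul2r k0) hnum.
  have hrb := Kf_redblue X HF.
  have hbu := Kf_blue_up X HF.
  have hbl := Kf_blue_low X s HF.
  rewrite cY hF in hbu hbl hrb.
  exact: (ub_arith hD hrb b2k hbu hbl).
have [HF1 inj1] := lfactor_ok k0 (fib2_card q0 k0).
have [HF2 inj2] := lfactor_ok k0 (fib1_card q0 k0).
split.
  exists (lfactor (f2 (k:=K.+2) q0)); split => //.
  have hrb := Kf_redblue X HF1.
  have hnum := Kf_num HF1.
  have hF : #|lfactor (f2 (k:=K.+2) q0)| = q by apply/eqP; rewrite -(eqn_pmul2r k0) hnum.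
  have nb : n_blue X (lfactor (f2 (k:=K.+2) q0)) = p * 'C(s.+1, 2) + (q - p) * 'C(s, 2).
    rewrite n_blue_sum; last by case/and3P: (Kf_part HF1).
    rewrite lfactor_sum //.
    under eq_bigr => i _ do rewrite (fib2_Y q0 k0 i hN pq sk) (fun_if (fun x => 'C(x, 2))).
    by rewrite sum_if (minn_idPl pq).
  rewrite nb hF in hrb.
  exact: (red_arith hD D2 s0 hrb).
exists (lfactor (f1 (q:=q) k0)); split => //.
rewrite n_blue_sum; last by case/and3P: (Kf_part HF2).
rewrite lfactor_sum //.
have hY : forall i : 'I_q, #|fib (f1 (q:=q) (k:=K.+2) k0) i :&: ~: X| = if i < t then K.+2 else 0.
  move=> i; exact: (@fib1_Y q K.+2 q0 k0 N t i (erefl _)).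
under eq_bigr => i _ do rewrite hY (fun_if (fun x => 'C(x, 2))).
rewrite sum_if (minn_idPl tq).
have -> : 'C(0, 2) = 0 by [].
by rewrite muln0 addn0.
Qed.

Unset Implicit Arguments. Set Strict Implicit.
Local Open Scope ring_scope.

Theorem lemma3p5 (R : realType) (k : nat) : (2 <= k)%N ->
  exists m : nat, (0 < m)%N /\ exists X : {set 'I_m},
    (exists F : {set {set 'I_m}}, is_Kfactor k F /\
        @lambda_k R k * m%:R <= (n_red X F)%:R) /\
    (exists F : {set {set 'I_m}}, is_Kfactor k F /\
        @lambda_k R k * m%:R <= (n_blue X F)%:R).
Proof.
case: k => [|[|K]] // _.
have [q [V [X [q0 [ub [[F1 [HF1 r1]] [F2 [HF2 b2]]]]]]]] := core K.
have m0 : (0 < q * K.+2)%N by rewrite muln_gt0 q0.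
have lamV : lambda_k R K.+2 * (q * K.+2)%:R <= V%:R.
  rewrite -ler_pdivlMr ?ltr0n //.
  have hub : forall l, @lambda_set R K.+2 l -> l <= V%:R / (q * K.+2)%:R.
    move=> l /(_ (q * K.+2)%N (dvdn_mull _ (dvdnn _)) X) [F [HF H]].
    rewrite ler_pdivlMr ?ltr0n //.
    have [hr hb] := ub F HF.
    by case: H => H; apply: (le_trans H); rewrite ler_nat.
  rewrite /lambda_k.
  case: (pselect (exists l, @lambda_set R K.+2 l)) => [ne|e].
    by apply: ge_sup => // l; apply: hub.
  have -> : @lambda_set R K.+2 = classical_sets.set0.
    apply: funext => l; apply: propext; split => // H; exfalso; apply: e; by exists l.
  by rewrite sup0 divr_ge0 // ler0n.
exists (q * K.+2)%N; split => //; exists X; split.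
  by exists F1; split => //; rewrite r1.
by exists F2; split => //; rewrite b2.
Qed.
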